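(* Let $\mathcal B$ be a finite set of complex numbers $\beta$ with $\mathrm{Re}(\beta)\ge\gamma\ge1$, let $s>0$, and $\theta_\beta(z)=(z+\beta)^{-1}$. Let $H$ be a bounded, mildly regular open subset of $\mathbb C$ with $H\supset\{z:|z-1/(2\gamma)|<1/(2\gamma)\}$ and $\mathrm{Re}(z)>0$ for all $z\in H$, and let $v_s$ be the strictly positive eigenvector (unique up to normalization) of $\Lambda_s:C^m(\bar H)\to C^m(\bar H)$, $(\Lambda_sf)(z)=\sum_{\beta\in\mathcal B}|z+\beta|^{-2s}f(\theta_\beta(z))$, $m\ge1$. Then for all $z_0,z_1\in H$, $$v_s(z_0)\le v_s(z_1)\exp\big[(\sqrt5\,s/\gamma)|z_1-z_0|\big].$$
   Context: $H$ is mildly regular if there exist $\eta>0$, $M\ge1$ such that whenever $x,y\in H$ with $\|x-y\|<\eta$ there is a Lipschitz $\psi:[0,1]\to H$ with $\psi(0)=x$, $\psi(1)=y$, $\int_0^1\|\psi'(t)\|dt\le M\|x-y\|$. $C^m(\bar H)$ is the space of real $C^m$ functions on $H$ whose partial derivatives of order $\le m$ extend continuously to $\bar H$. *)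

(* Defs.v *)
(* Complex numbers are represented as pairs
   (Re z, Im z) : R * R, with complex arithmetic and the complex modulus
   written out explicitly below. *)
From HB Require Import structures.
From mathcomp Require Import all_boot all_order all_algebra.
From mathcomp Require Import all_classical all_reals all_analysis.
Set Implicit Arguments. Unset Strict Implicit. Unset Printing Implicit Defensive.
Import Order.TTheory GRing.Theory Num.Theory.
Import numFieldNormedType.Exports.
Local Open Scope classical_set_scope.
Local Open Scope ring_scope.

Section Defs.
Variable R : realType.

Definition cabs (z : R * R) : R := Num.sqrt (z.1 ^+ 2 + z.2 ^+ 2).

Definition cinv (z : R * R) : R * R :=
  let n := z.1 ^+ 2 + z.2 ^+ 2 in (z.1 / n, - z.2 / n).

Definition theta (b z : R * R) : R * R := cinv (z + b).

Definition Lambda (B : seq (R * R)) (s : R) (f : R * R -> R) (z : R * R) : R :=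
  \sum_(b <- B) (cabs (z + b)) `^ (- (2 * s)) * f (theta b z).

Definition dir (i : bool) : R * R := if i then (1, 0) else (0, 1).

Fixpoint pd (l : seq bool) (f : R * R -> R) : R * R -> R :=
  match l with
  | [::] => f
  | i :: l' => fun p => 'D_(dir i) (pd l' f) p
  end.

(* f (restricted to the open set H) belongs to C^m(closure H): all partial
   derivatives of order <= m exist and are continuous on H, and each of
   them extends continuously to the closure of H. *)
Definition CmBar (m : nat) (H : set (R * R)) (f : R * R -> R) : Prop :=
  forall l : seq bool, (size l <= m)%N ->
    [/\ (size l < m)%N -> forall p, H p ->
          forall i, derivable (pd l f) p (dir i),
        forall p, H p -> {for p, continuous (pd l f)}
      & exists g : R * R -> R,
          {within closure H, continuous g} /\ forall p, H p -> pd l f p = g p].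

Definition mildly_regular (H : set (R * R)) : Prop :=
  exists eta : R, exists M : R, 0 < eta /\ 1 <= M /\
    forall x y, H x -> H y -> cabs (x - y) < eta ->
      exists psi : R -> R * R,
        [/\ [lipschitz psi t | t in `[0, 1]],
            forall t, t \in `[0, 1] -> H (psi t),
            psi 0 = x, psi 1 = y &
            (\int[lebesgue_measure]_(t in `[0%R, 1%R]) (cabs (derive1 psi t))%:E
               <= (M * cabs (x - y))%:E)%E].

End Defs.

(* Main.v *)
Require Import Defs.
From HB Require Import structures.
From mathcomp Require Import all_boot all_order all_algebra.
From mathcomp Require Import all_classical all_reals all_analysis.
From mathcomp Require Import ring lra.
Import Order.TTheory GRing.Theory Num.Theory.
Import numFieldNormedType.Exports.
Local Open Scope classical_set_scope.
Local Open Scope ring_scope.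

Lemma fstc {T U : topologicalType} (x : T * U) : {for x, continuous (@fst T U)}.
Proof. exact: cvg_fst. Qed.
Lemma sndc {T U : topologicalType} (x : T * U) : {for x, continuous (@snd T U)}.
Proof. exact: cvg_snd. Qed.

Section Alg.
Variable R : realType.
Implicit Types z u w X Y P : R * R.

Definition n2 z : R := z.1 ^+ 2 + z.2 ^+ 2.

Lemma n2_ge0 z : 0 <= n2 z.
Proof. by rewrite /n2 addr_ge0 // sqr_ge0. Qed.

Lemma cabs_ge0 z : 0 <= cabs z.
Proof. exact: sqrtr_ge0. Qed.

Lemma cabs_sq z : cabs z ^+ 2 = n2 z.
Proof. by rewrite /cabs sqr_sqrtr // n2_ge0. Qed.

Lemma sq_inj (a b : R) : 0 <= a -> 0 <= b -> a ^+ 2 = b ^+ 2 -> a = b.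
Proof. move=> a0 b0 e; apply/eqP; rewrite -(@eqrXn2 _ 2) //. by apply/eqP. Qed.

Lemma cabs_fst z : z.1 <= cabs z.
Proof.
rewrite /cabs (le_trans (ler_norm _)) // -sqrtr_sqr ler_wsqrtr //.
by rewrite /n2 lerDl sqr_ge0.
Qed.

Lemma cabs_lt z r : 0 < r -> n2 z < r ^+ 2 -> cabs z < r.
Proof.
move=> r0 h; have c0 := cabs_ge0 z; have := cabs_sq z.
move=> e; rewrite -e in h; nra.
Qed.

Lemma cabs_lt_inv z r : 0 < r -> cabs z < r -> n2 z < r ^+ 2.
Proof.
move=> r0 h; have c0 := cabs_ge0 z; rewrite -cabs_sq; nra.
Qed.

Lemma cabs_triangle u w : cabs (u + w) <= cabs u + cabs w.
Proof.
have cu := cabs_ge0 u; have cw := cabs_ge0 w; have cuw := cabs_ge0 (u + w).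
have eu := cabs_sq u; have ew := cabs_sq w; have euw := cabs_sq (u + w).
have dot : (u.1 * w.1 + u.2 * w.2) <= cabs u * cabs w.
  have : (u.1 * w.1 + u.2 * w.2) ^+ 2 <= (cabs u * cabs w) ^+ 2.
    rewrite exprMn eu ew /n2; have := sqr_ge0 (u.1 * w.2 - u.2 * w.1); nra.
  have := mulr_ge0 cu cw; nra.
have : cabs (u + w) ^+ 2 <= (cabs u + cabs w) ^+ 2.
  rewrite euw /n2 /= sqrrD; move: eu ew; rewrite /n2 => eu ew. nra.
nra.
Qed.

Lemma cabs_sub_sym u w : cabs (u - w) = cabs (w - u).
Proof. by rewrite /cabs /n2 /=; congr Num.sqrt; ring. Qed.

Lemma n2_pos z : z.1 != 0 -> 0 < n2 z.
Proof. move=> h; rewrite /n2; have := sqr_ge0 z.2; have : 0 < z.1 ^+ 2 by rewrite exprn_even_gt0. lra. Qed.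

Lemma n2_cinv X : n2 X != 0 -> n2 (cinv X) = (n2 X)^-1.
Proof. move=> h; rewrite /n2 /cinv /= in h *; field. by []. Qed.

Lemma cinv_diff X Y : n2 X != 0 -> n2 Y != 0 ->
  cabs (cinv X - cinv Y) * (cabs X * cabs Y) = cabs (X - Y).
Proof.
move=> hX hY; apply: sq_inj.
- by apply: mulr_ge0; [exact: cabs_ge0|apply: mulr_ge0; exact: cabs_ge0].
- exact: cabs_ge0.
rewrite !exprMn !cabs_sq; rewrite /n2 /cinv /= in hX hY *. field.
by rewrite hX hY.
Qed.

Lemma pole_id X P : n2 X != 0 -> n2 P != 0 ->
  cabs (X - cinv P) * cabs P = cabs X * cabs (cinv X - P).
Proof.
move=> hX hP; apply: sq_inj.
- by apply: mulr_ge0; exact: cabs_ge0.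
- by apply: mulr_ge0; exact: cabs_ge0.
rewrite !exprMn !cabs_sq; rewrite /n2 /cinv /= in hX hP *. field.
by rewrite hX hP.
Qed.


Lemma cabs_pos z : 0 < z.1 -> 0 < cabs z.
Proof. move=> h; exact: lt_le_trans h (cabs_fst z). Qed.

Lemma n2_gt0_fst z : 0 < z.1 -> 0 < n2 z.
Proof. move=> h; rewrite /n2; have := sqr_ge0 z.2; nra. Qed.

Lemma n2_gt0_fstN z : z.1 < 0 -> 0 < n2 z.
Proof. move=> h; rewrite /n2; have := sqr_ge0 z.2; nra. Qed.

Lemma n2_sum_le (l : seq (R * R)) b : b \in l -> n2 b <= \sum_(c <- l) n2 c.
Proof.
elim: l => // c l IH; rewrite in_cons big_cons => /orP [/eqP -> | hb].
  by rewrite lerDl sumr_ge0 // => *; exact: n2_ge0.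
by rewrite (le_trans (IH hb)) // lerDr n2_ge0.
Qed.

Lemma sum_neg (l : seq (R * R)) (f : R * R -> R) : l != [::] ->
  (forall b, b \in l -> f b < 0) -> \sum_(b <- l) f b < 0.
Proof.
elim: l => // c l IH _ h; rewrite big_cons.
have hc : f c < 0 by apply: h; rewrite mem_head.
case: l IH h => [|d l] IH h; first by rewrite big_nil addr0.
rewrite -[X in _ < X]addr0 ltrD //; apply: IH => // b hb; apply: h.
by rewrite in_cons hb orbT.
Qed.

Lemma bernoulli (x : R) n : 0 <= x -> 1 + n%:R * x <= (1 + x) ^+ n.
Proof.
move=> x0; elim: n => [|n IH]; first by rewrite mul0r addr0 expr0.
rewrite exprS; have h1 : 0 <= (1 + x) ^+ n by rewrite exprn_ge0 // addr_ge0.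
rewrite -natr1; have n0 : (0:R) <= n%:R by []. have := mulr_ge0 n0 (mulr_ge0 x0 x0). nra.
Qed.

Lemma cabs0_eq z : cabs z = 0 -> z = 0.
Proof.
move=> h; have : n2 z = 0 by rewrite -cabs_sq h expr0n.
rewrite /n2 => e; have h1 := sqr_ge0 z.1; have h2 := sqr_ge0 z.2.
have e1 : z.1 ^+ 2 = 0 by lra.
have e2 : z.2 ^+ 2 = 0 by lra.
move/eqP: e1; move/eqP: e2; rewrite !sqrf_eq0 => /eqP a2 /eqP a1.
by clear -a1 a2; case: z a1 a2 => /= ? ? -> ->.
Qed.

Lemma cabs_posN z : z.1 < 0 -> 0 < cabs z.
Proof. by move=> h; rewrite /cabs sqrtr_gt0 n2_gt0_fstN. Qed.

Section Main.
Variables (B : seq (R * R)) (gamma s : R) (H : set (R * R)) (v : R * R -> R) (lambda : R).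
Hypotheses (hB0 : B != [::]) (hg : 1 <= gamma) (hb : forall b, b \in B -> gamma <= b.1)
  (hs : 0 < s)
  (hD : forall z, cabs (z - (1 / (2 * gamma), 0)) < 1 / (2 * gamma) -> H z)
  (hH1 : forall z, H z -> 0 < z.1)
  (hvc : forall p, H p -> {for p, continuous v})
  (hvpos : forall z, H z -> 0 < v z)
  (heig : forall z, H z -> Lambda B s v z = lambda * v z).

Ltac prep := have ? := hg; have ? := hs.

Definition Mb2 := \sum_(c <- B) n2 c.
Definition a := gamma / (2 + 2 * Mb2).
Definition Dp u := n2 u * gamma < u.1.
Definition K : set (R * R) := [set u | a <= u.1] `&` [set u | 0 <= u.1 - n2 u * (gamma + a)].

Lemma Mb2_ge0 : 0 <= Mb2.
Proof. by rewrite /Mb2 sumr_ge0 // => *; exact: n2_ge0. Qed.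

Lemma a_gt0 : 0 < a.
Proof. have := Mb2_ge0; rewrite /a => ?; prep; rewrite divr_gt0 //; lra. Qed.

Lemma b1_gt0 b : b \in B -> gamma <= b.1 /\ 0 < b.1.
Proof. move=> h; prep; have := hb _ h; split => //; lra. Qed.

Lemma Dp_H u : Dp u -> H u.
Proof.
rewrite /Dp => h; prep; apply: hD; apply: cabs_lt; first by rewrite divr_gt0 //; lra.
rewrite /n2 /=.
have g0 : 0 < gamma by lra.
have e : (u.1 - 1 / (2 * gamma)) ^+ 2 + (u.2 - 0) ^+ 2 =
   n2 u - u.1 / gamma + (1 / (2 * gamma)) ^+ 2.
  rewrite /n2; field; lra.
rewrite e; suff : n2 u < u.1 / gamma by lra.
by rewrite ltr_pdivlMr.
Qed.

Lemma K_Dp u : K u -> Dp u /\ a <= u.1.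
Proof.
case=> /= h1 h2; split => //; rewrite /Dp.
have a0 := a_gt0; have := @n2_gt0_fst u (lt_le_trans a0 h1); nra.
Qed.

Lemma theta_fst b z : (theta b z).1 = (z + b).1 / n2 (z + b).
Proof. by []. Qed.

Lemma n2_theta b z : 0 < (z + b).1 -> n2 (theta b z) = (n2 (z + b))^-1.
Proof. move=> h; apply: n2_cinv; by rewrite gt_eqF // n2_gt0_fst. Qed.

Lemma S1 b z : b \in B -> 0 < z.1 -> Dp (theta b z).
Proof.
move=> hbB hz; prep; have [g1 _] := b1_gt0 _ hbB.
have w1 : gamma < (z + b).1 by rewrite /=; lra.
have wp : 0 < (z + b).1 by lra.
rewrite /Dp n2_theta // theta_fst mulrC ltr_pM2r ?invr_gt0 ?n2_gt0_fst //.
Qed.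

Lemma Dp_n2 z : Dp z -> n2 z <= 1 /\ 0 < z.1.
Proof.
rewrite /Dp => h; prep; have n0 := n2_ge0 z.
have z0 : 0 < z.1 by nra.
have : z.1 ^+ 2 <= n2 z by rewrite /n2 lerDl sqr_ge0.
move=> h2; split => //.
have h3 : n2 z < z.1 by nra.
have h4 : z.1 < 1 by nra.
lra.
Qed.

Lemma S2 b z : b \in B -> Dp z -> a <= (theta b z).1.
Proof.
move=> hbB hz; prep; have [g1 b0] := b1_gt0 _ hbB; have [n1 z0] := Dp_n2 _ hz.
have w1 : gamma <= (z + b).1 by rewrite /=; lra.
have nb := n2_sum_le _ _ hbB; rewrite -/Mb2 in nb.
have nw : n2 (z + b) <= 2 + 2 * Mb2.
  move: n1 nb; rewrite /n2 /= => n1 nb.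
  have := sqr_ge0 (z.1 - b.1); have := sqr_ge0 (z.2 - b.2); nra.
have nw0 : 0 < n2 (z + b) by apply: n2_gt0_fst; lra.
have m0 := Mb2_ge0.
rewrite theta_fst /a ler_pdivrMr //; last lra.
rewrite mulrAC ler_pdivlMr //. nra.
Qed.

Lemma S3 b z : b \in B -> Dp z -> a <= z.1 -> K (theta b z).
Proof.
move=> hbB hz hza; prep; have [g1 b0] := b1_gt0 _ hbB; split; first exact: S2.
have w1 : gamma + a <= (z + b).1 by rewrite /=; lra.
have a0 := a_gt0.
have wp : 0 < (z + b).1 by lra.
change (0 <= (theta b z).1 - n2 (theta b z) * (gamma + a)).
rewrite subr_ge0 n2_theta // theta_fst mulrC ler_pM2r ?invr_gt0 ?n2_gt0_fst //.
Qed.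


Lemma contr b x y c : b \in B -> 0 <= c -> c <= x.1 -> c <= y.1 ->
  cabs (theta b x - theta b y) <= cabs (x - y) / (gamma + c) ^+ 2.
Proof.
move=> hbB c0 cx cy; prep; have [g1 b0] := b1_gt0 _ hbB.
have X1 : gamma + c <= (x + b).1 by rewrite /=; lra.
have Y1 : gamma + c <= (y + b).1 by rewrite /=; lra.
have cX := cabs_fst (x + b); have cY := cabs_fst (y + b).
have e := @cinv_diff (x + b) (y + b).
have ee : x + b - (y + b) = x - y by rewrite opprD addrACA subrr addr0.
rewrite ee in e.
have e' := e (lt0r_neq0 (@n2_gt0_fst (x + b) ltac:(lra)))
             (lt0r_neq0 (@n2_gt0_fst (y + b) ltac:(lra))).
rewrite /theta; rewrite -e'.
have t0 := cabs_ge0 (cinv (x + b) - cinv (y + b)).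
have gc : 0 < gamma + c by lra.
rewrite ler_pdivlMr; last by rewrite exprn_gt0.
apply: ler_wpM2l => //; rewrite expr2; apply: ler_pM; lra.
Qed.


Lemma mediant x y : H x -> H y -> exists2 b, b \in B &
  v x * (cabs (y + b) `^ (- (2 * s)) * v (theta b y)) <=
  v y * (cabs (x + b) `^ (- (2 * s)) * v (theta b x)).
Proof.
move=> Hx Hy; case: (pselect (exists2 b, b \in B &
  v x * (cabs (y + b) `^ (- (2 * s)) * v (theta b y)) <=
  v y * (cabs (x + b) `^ (- (2 * s)) * v (theta b x)))) => // hn.
exfalso.
have hlt : forall b, b \in B ->
  v y * (cabs (x + b) `^ (- (2 * s)) * v (theta b x)) -
  v x * (cabs (y + b) `^ (- (2 * s)) * v (theta b y)) < 0.
  move=> b hbB; rewrite subr_lt0 ltNge; apply/negP => hle; apply: hn; by exists b.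
have := sum_neg _ _ hB0 hlt.
rewrite sumrB -!mulr_sumr.
have e1 := heig _ Hx; have e2 := heig _ Hy; rewrite /Lambda in e1 e2.
rewrite e1 e2; have -> : v y * (lambda * v x) - v x * (lambda * v y) = 0 by ring.
by rewrite ltxx.
Qed.

Definition E (t : R) := t `^ (2 * s).

Lemma E_gt0 (t : R) : 0 < t -> 0 < E t.
Proof. by move=> h; rewrite /E powR_gt0. Qed.

Lemma E_ge0 (t : R) : 0 <= E t.
Proof. by rewrite /E powR_ge0. Qed.

Lemma E_M (t r : R) : 0 <= t -> 0 <= r -> E (t * r) = E t * E r.
Proof. by move=> *; rewrite /E powRM. Qed.

Lemma E_le (t r : R) : 0 <= t -> t <= r -> E t <= E r.
Proof.
move=> t0 tu; rewrite /E; apply: ge0_ler_powR => //.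
  by prep; lra.
all: rewrite nnegrE //; exact: le_trans tu.
Qed.

Lemma E_inv (t : R) : t `^ (- (2 * s)) = (E t)^-1.
Proof. by rewrite /E powRN. Qed.

Lemma E_exp (t : R) : E (expR t) = expR (t * (2 * s)).
Proof. by rewrite /E expRM. Qed.

Definition Rel x y x' y' p :=
  v x * v y' * E (cabs (x - p)) <= v y * v x' * E (cabs (y - p)).

Lemma step_rel x y : H x -> H y ->
  exists2 b, b \in B & Rel x y (theta b x) (theta b y) (- b).
Proof.
move=> Hx Hy; have [b hbB hle] := mediant _ _ Hx Hy; exists b => //.
have [g1 b0] := b1_gt0 _ hbB; prep.
have x1 := hH1 _ Hx; have y1 := hH1 _ Hy.
have xb : 0 < (x + b).1 by rewrite /=; lra.
have yb : 0 < (y + b).1 by rewrite /=; lra.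
have EX := E_gt0 _ (cabs_pos _ xb).
have EY := E_gt0 _ (cabs_pos _ yb).
rewrite /Rel !opprK; rewrite !E_inv in hle.
move: hle; rewrite -(ler_pM2r (mulr_gt0 EX EY)).
set A := E (cabs (x + b)); set C := E (cabs (y + b)).
set t1 := v (theta b x); set t2 := v (theta b y).
have -> : v x * (C^-1 * t2) * (A * C) = v x * t2 * A by field; rewrite gt_eqF.
by have -> : v y * (A^-1 * t1) * (A * C) = v y * t1 * C by field; rewrite gt_eqF.
Qed.


Lemma compose x y x' y' b p : b \in B -> H x -> H y -> H x' -> H y' ->
  p.1 <= - gamma ->
  Rel x y (theta b x) (theta b y) (- b) -> Rel (theta b x) (theta b y) x' y' p ->
  Rel x y x' y' (cinv p - b) /\ (cinv p - b).1 <= - gamma.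
Proof.
move=> hbB Hx Hy Hx' Hy' hp r1 r2; prep; have [g1 b0] := b1_gt0 _ hbB.
have x1 := hH1 _ Hx; have y1 := hH1 _ Hy.
have xb : 0 < (x + b).1 by rewrite /=; lra.
have yb : 0 < (y + b).1 by rewrite /=; lra.
have p1 : p.1 < 0 by lra.
have np := n2_gt0_fstN _ p1.
split; last first.
  change (p.1 / n2 p - b.1 <= - gamma).
  have : p.1 / n2 p <= 0 by rewrite ler_pdivrMr // mul0r; lra.
  lra.
have Htx : H (theta b x) by apply: Dp_H; apply: S1.
have Hty : H (theta b y) by apply: Dp_H; apply: S1.
have vx := hvpos _ Hx; have vy := hvpos _ Hy; have vx' := hvpos _ Hx'; have vy' := hvpos _ Hy'.
have vtx := hvpos _ Htx; have vty := hvpos _ Hty.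
have ex : forall z, z - (cinv p - b) = z + b - cinv p.
  by move=> z; rewrite opprB addrA.
rewrite /Rel !ex.
have pid : forall z, 0 < (z + b).1 ->
    E (cabs (z + b - cinv p)) * E (cabs p) = E (cabs (z + b)) * E (cabs (theta b z - p)).
  move=> z zb; rewrite -!E_M ?cabs_ge0 //; congr E.
  apply: pole_id; by rewrite gt_eqF // n2_gt0_fst.
have pidx := pid _ xb; have pidy := pid _ yb.
move: r1 r2; rewrite /Rel !opprK => r1 r2.
have EP := E_gt0 _ (cabs_posN _ p1).
move: pidx pidy r1 r2 EP.
set Ax := E (cabs (x + b - cinv p)); set Ay := E (cabs (y + b - cinv p)).
set P := E (cabs p); set X := E (cabs (x + b)); set Y := E (cabs (y + b)).
set TX := E (cabs (theta b x - p)); set TY := E (cabs (theta b y - p)).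
set tx := v (theta b x); set ty := v (theta b y).
move=> pidx pidy r1 r2 EP.
have X0 : 0 <= X := E_ge0 _. have TX0 : 0 <= TX := E_ge0 _.
have key := ler_pM (mulr_ge0 (mulr_ge0 (ltW vx) (ltW vty)) X0)
                   (mulr_ge0 (mulr_ge0 (ltW vtx) (ltW vy')) TX0) r1 r2.
have c0 : 0 < tx * ty * P by rewrite !mulr_gt0.
rewrite -(ler_pM2l c0).
have -> : tx * ty * P * (v x * v y' * Ax) = v x * v y' * tx * ty * (Ax * P) by ring.
have -> : tx * ty * P * (v y * v x' * Ay) = v y * v x' * tx * ty * (Ay * P) by ring.
rewrite pidx pidy.
have e1 : v x * v y' * tx * ty * (X * TX) = v x * ty * X * (tx * v y' * TX) by ring.
have e2 : v y * v x' * tx * ty * (Y * TY) = v y * tx * Y * (ty * v x' * TY) by ring.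
by rewrite e1 e2.
Qed.


Lemma rel_bound x y x' y' p (M c : R) : H x -> H y -> H x' -> H y' ->
  p.1 <= - gamma -> 0 < M -> Rel x y x' y' p ->
  v x' <= M * v y' * expR c ->
  v x <= M * v y * expR (c + 2 * s * cabs (x - y) / gamma).
Proof.
move=> Hx Hy Hx' Hy' hp M0 r hc; prep.
have x1 := hH1 _ Hx.
have vx := hvpos _ Hx; have vy := hvpos _ Hy; have vx' := hvpos _ Hx'; have vy' := hvpos _ Hy'.
set d := cabs (x - y).
have d0 : 0 <= d := cabs_ge0 _.
have q1 : gamma <= cabs (x - p).
  apply: le_trans (cabs_fst _); rewrite /=; lra.
have g0 : 0 < gamma by lra.
have hyp : cabs (y - p) <= cabs (x - p) * expR (d / gamma).
  have e : y - p = (y - x) + (x - p) by rewrite addrA subrK.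
  rewrite e; apply: le_trans (cabs_triangle _ _) _.
  rewrite cabs_sub_sym -/d.
  have h1 := expR_ge1Dx (d / gamma).
  have h2 : d <= cabs (x - p) * (d / gamma).
    rewrite mulrA ler_pdivlMr //; nra.
  have q0 : 0 <= cabs (x - p) by lra.
  have := ler_wpM2l q0 h1; lra.
have hE : E (cabs (y - p)) <= E (cabs (x - p)) * expR (d / gamma * (2 * s)).
  have ee := expR_gt0 (d / gamma).
  rewrite -E_exp -E_M; [|lra|lra].
  by apply: E_le => //; exact: cabs_ge0.
have Eq0 := E_gt0 _ (lt_le_trans g0 q1).
move: r; rewrite /Rel => r.
have : v x * v y' * E (cabs (x - p)) <=
   v y * (M * v y' * expR c) * (E (cabs (x - p)) * expR (d / gamma * (2 * s))).
  apply: le_trans r _; apply: ler_pM; first by rewrite mulr_ge0 // ltW.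
  - exact: E_ge0.
  - by apply: ler_wpM2l => //; exact: ltW.
  - exact: hE.
have -> : v y * (M * v y' * expR c) * (E (cabs (x - p)) * expR (d / gamma * (2 * s)))
   = (M * v y * expR (c + 2 * s * d / gamma)) * (v y' * E (cabs (x - p))).
  rewrite expRD (_ : d / gamma * (2 * s) = 2 * s * d / gamma); first ring.
  by rewrite mulrC mulrA.
rewrite (_ : v x * v y' * E (cabs (x - p)) = v x * (v y' * E (cabs (x - p)))); last by ring.
by rewrite ler_pM2r // mulr_gt0.
Qed.


Lemma n2_cont : continuous (@n2).
Proof.
move=> z; apply: (@continuousD _ _ _ (fun z : R * R => z.1 ^+ 2) (fun z => z.2 ^+ 2)).
  have := continuous_comp (fstc z) (@exprn_continuous R 2 z.1); exact.
have := continuous_comp (sndc z) (@exprn_continuous R 2 z.2); exact.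
Qed.

Lemma cabs_cont : continuous (@cabs R).
Proof. move=> z; have := continuous_comp (n2_cont z) (@sqrt_continuous R (n2 z)); exact. Qed.

Lemma K_closed : closed K.
Proof.
apply: closedI.
  have := (@preimage_closed _ _ fst [set t | a <= t] (fun u _ => fstc u) (@closed_ge _ a)); exact.
have hc : forall u, {for u, continuous (fun u : R * R => u.1 - n2 u * (gamma + a))}.
  move=> u; apply: continuousB; first exact: fstc.
  have := continuousM (n2_cont u) (@cst_continuous _ _ (gamma + a) u); exact.
have := (@preimage_closed _ _ _ [set t : R | 0 <= t] (fun u _ => hc u) (@closed_ge _ 0)); exact.
Qed.

Lemma K_compact : compact K.
Proof.
have cb : compact (`[(0:R), 1] `*` `[(-1:R), 1]).
  have := compact_setX (@segment_compact R 0 1) (@segment_compact R (-1) 1); exact.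
apply: (subclosed_compact K_closed cb).
move=> u [/= h1 h2]; prep; have a0 := a_gt0.
have n0 := n2_ge0 u.
have e1 : u.1 ^+ 2 <= n2 u by rewrite /n2 lerDl sqr_ge0.
have e2 : u.2 ^+ 2 <= n2 u by rewrite /n2 lerDr sqr_ge0.
have h3 : n2 u <= u.1 by nra.
have h4 : u.1 <= 1 by nra.
split => /=; rewrite in_itv /=; apply/andP; split; nra.
Qed.


Lemma K_H u : K u -> H u.
Proof. by move=> /K_Dp [h _]; apply: Dp_H. Qed.

Definition q := ((gamma + a) ^+ 2)^-1.

Lemma q_ge0 : 0 <= q.
Proof. by rewrite /q invr_ge0 exprn_ge0 //; prep; have := a_gt0; lra. Qed.

Lemma claimK n x y : K x -> K y -> exists x', exists y', exists p,
  [/\ K x', K y', p.1 <= - gamma, Rel x y x' y' p &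
      cabs (x' - y') <= q ^+ n.+1 * cabs (x - y)].
Proof.
have a0 := a_gt0.
elim: n x y => [|n IH] x y Kx Ky.
  have [Dx ax] := K_Dp _ Kx; have [Dy ay] := K_Dp _ Ky.
  have [b hbB r] := step_rel _ _ (K_H _ Kx) (K_H _ Ky).
  exists (theta b x), (theta b y), (- b); split => //.
  - exact: S3.
  - exact: S3.
  - by rewrite /=; have := hb _ hbB; lra.
  - rewrite expr1 mulrC; exact: contr hbB (ltW a0) ax ay.
have [Dx ax] := K_Dp _ Kx; have [Dy ay] := K_Dp _ Ky.
have [b hbB r] := step_rel _ _ (K_H _ Kx) (K_H _ Ky).
have Ktx : K (theta b x) by exact: S3.
have Kty : K (theta b y) by exact: S3.
have [x' [y' [p [Kx' Ky' hp r2 hd]]]] := IH _ _ Ktx Kty.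
have [r3 hp3] := compose _ _ _ _ _ _ hbB (K_H _ Kx) (K_H _ Ky) (K_H _ Kx') (K_H _ Ky') hp r r2.
exists x', y', (cinv p - b); split => //.
apply: le_trans hd _; rewrite (exprSr q n.+1) -mulrA; apply: ler_wpM2l; first exact: exprn_ge0 q_ge0.
rewrite mulrC; exact: contr hbB (ltW a0) ax ay.
Qed.

Lemma lift x y (T : R * R -> R * R -> Prop) (r : R) : H x -> H y -> 0 <= r ->
  (forall b, b \in B -> exists x', exists y', exists p,
     [/\ T x' y' /\ (H x' /\ H y'), p.1 <= - gamma, Rel (theta b x) (theta b y) x' y' p &
         cabs (x' - y') <= r * cabs (theta b x - theta b y)]) ->
  exists x', exists y', exists p,
     [/\ T x' y' /\ (H x' /\ H y'), p.1 <= - gamma, Rel x y x' y' p &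
         cabs (x' - y') <= r * cabs (x - y)].
Proof.
move=> Hx Hy r0 hT; have [b hbB rel] := step_rel _ _ Hx Hy.
have [x' [y' [p [[Tx [Hx' Hy']] hp r2 hd]]]] := hT b hbB.
have [r3 hp3] := compose _ _ _ _ _ _ hbB Hx Hy Hx' Hy' hp rel r2.
exists x', y', (cinv p - b); split => //.
apply: le_trans hd _; apply: ler_wpM2l => //.
have x1 := hH1 _ Hx; have y1 := hH1 _ Hy.
apply: le_trans (contr _ _ _ _ hbB (lexx 0) (ltW x1) (ltW y1)) _.
rewrite addr0 ler_pdivrMr; last by prep; rewrite exprn_gt0 //; lra.
rewrite ler_peMr ?cabs_ge0 //; prep; nra.
Qed.

Lemma prephase n z0 z1 : H z0 -> H z1 -> exists x', exists y', exists p,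
     [/\ (K x' /\ K y') /\ (H x' /\ H y'), p.1 <= - gamma, Rel z0 z1 x' y' p &
         cabs (x' - y') <= q ^+ n.+1 * cabs (z0 - z1)].
Proof.
move=> H0 H1; have qn := exprn_ge0 n.+1 q_ge0.
apply: lift => // b1 hb1.
have D1x := S1 _ _ hb1 (hH1 _ H0); have D1y := S1 _ _ hb1 (hH1 _ H1).
apply: lift => //; try exact: Dp_H.
move=> b2 hb2.
have D2x := S1 _ _ hb2 ((Dp_n2 _ D1x).2); have D2y := S1 _ _ hb2 ((Dp_n2 _ D1y).2).
have A2x := S2 _ _ hb2 D1x; have A2y := S2 _ _ hb2 D1y.
apply: lift => //; try exact: Dp_H.
move=> b3 hb3.
have K3x := S3 _ _ hb3 D2x A2x; have K3y := S3 _ _ hb3 D2y A2y.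
have [x' [y' [p [Kx' Ky' hp r hd]]]] := claimK n _ _ K3x K3y.
exists x', y', p; split => //; split => //; split; exact: K_H.
Qed.


Definition C := Num.sqrt 5 * s / gamma.

Lemma sqrt5_gt2 : 2 < Num.sqrt (5 : R).
Proof.
have e : Num.sqrt (4 : R) = 2.
  by rewrite (_ : (4 : R) = 2 ^+ 2) ?sqrtr_sqr ?ger0_norm //; rewrite expr2; lra.
by rewrite -e ltr_sqrt //; lra.
Qed.

Lemma C_gt : 2 * s / gamma < C.
Proof.
prep; rewrite /C ltr_pM2r ?invr_gt0; last lra.
have := sqrt5_gt2; nra.
Qed.

Lemma C_gt0 : 0 < C.
Proof. prep; apply: lt_trans C_gt; rewrite divr_gt0 //; lra. Qed.

Definition rho := (C - 2 * s / gamma) / (2 * C).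

Lemma rho_gt0 : 0 < rho.
Proof. have := C_gt; have := C_gt0 => ??; rewrite /rho divr_gt0 //; lra. Qed.

Lemma rho_prop (d : R) : 0 <= d -> 2 * s * d / gamma + C * (rho * d) <= C * d /\
  (0 < d -> 2 * s * d / gamma + C * (rho * d) < C * d).
Proof.
move=> d0; have := C_gt; have := C_gt0 => c0 cg.
have e1 : C * (rho * d) = (C - 2 * s / gamma) / 2 * d.
  rewrite /rho; field; apply/andP; split; apply: lt0r_neq0 => //; prep; lra.
have e2 : 2 * s * d / gamma = 2 * s / gamma * d by rewrite mulrAC.
rewrite e1 e2; split; first nra.
move=> dp; nra.
Qed.

Lemma exists_N : exists N, q ^+ N.+1 <= rho.
Proof.
prep; have a0 := a_gt0; have r0 := rho_gt0.
have ra : 0 <= (rho * a)^-1 by rewrite invr_ge0 ltW // mulr_gt0.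
have hN := archi_boundP ra; set N := Num.Def.archi_bound _ in hN.
exists N.
have h1 : q <= (1 + a)^-1.
  rewrite /q lef_pV2 ?posrE ?exprn_gt0 //; try lra.
  have : 1 + a <= gamma + a by lra.
  have : 1 <= gamma + a by lra.
  rewrite expr2; nra.
have h2 : q ^+ N.+1 <= ((1 + a)^-1) ^+ N.+1.
  by rewrite lerXn2r // ?nnegrE ?q_ge0 // invr_ge0; lra.
apply: le_trans h2 _; rewrite exprVn.
have b := bernoulli _ N.+1 (ltW a0).
have hb1 : (rho)^-1 <= 1 + N.+1%:R * a.
  move: hN; rewrite invfM => hN.
  have : (rho ^-1 * a^-1) * a <= N%:R * a by rewrite ler_pM2r //; exact: ltW.
  rewrite -mulrA mulVf ?gt_eqF // mulr1 -natr1 => h; nra.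
have pos : 0 < (1 + a) ^+ N.+1 by rewrite exprn_gt0 //; lra.
rewrite -(@invrK _ rho) lef_pV2 ?posrE ?invr_gt0 //.
exact: le_trans hb1 b.
Qed.


Lemma h_le x y (M c : R) : 0 < v x -> 0 < v y ->
  v x * expR (- c) / v y <= M -> v x <= M * v y * expR c.
Proof.
move=> vx vy; rewrite ler_pdivrMr // expRN ler_pdivrMr //; exact: expR_gt0.
Qed.

Lemma lipK x y : K x -> K y -> v x <= v y * expR (C * cabs (x - y)).
Proof.
move=> Kx Ky; have [N hN] := exists_N.
pose h := fun u : (R * R) * (R * R) => v u.1 * expR (- (C * cabs (u.1 - u.2))) / v u.2.
have ne : (K `*` K) !=set0 by exists (x, y).
have cKK := compact_setX K_compact K_compact.
have ch : {within K `*` K, continuous h}.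
  rewrite continuous_subspace_in => u /set_mem uK.
  apply: continuous_subspaceT_for => //.
  case: uK => Ku1 Ku2.
  have Hu1 := K_H _ Ku1; have Hu2 := K_H _ Ku2.
  have c1 : {for u, continuous (fun u : (R * R) * (R * R) => v u.1)}.
    have := continuous_comp (fstc u) (hvc _ Hu1); exact.
  have c2 : {for u, continuous (fun u : (R * R) * (R * R) => v u.2)}.
    have := continuous_comp (sndc u) (hvc _ Hu2); exact.
  have cs : {for u, continuous (fun u : (R * R) * (R * R) => u.1 - u.2)}.
    exact: sub_continuous.
  have ca : {for u, continuous (fun u : (R * R) * (R * R) => cabs (u.1 - u.2))}.
    have := continuous_comp cs (cabs_cont _); exact.
  have cm : {for u, continuous (fun u : (R * R) * (R * R) => - (C * cabs (u.1 - u.2)))}.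
    apply: continuousN.
    have := continuousM (@cst_continuous _ _ C u) ca; exact.
  have c3 : {for u, continuous (fun u : (R * R) * (R * R) => expR (- (C * cabs (u.1 - u.2))))}.
    have := continuous_comp cm (@continuous_expR R _); exact.
  have c4 : {for u, continuous (fun u : (R * R) * (R * R) => (v u.2)^-1)}.
    apply: continuousV => //; by rewrite gt_eqF // hvpos.
  have := continuousM (continuousM c1 c3) c4; exact.
have [[x0 y0] /set_mem [Kx0 Ky0] hmax] := compact_EVT_max ne cKK ch.
have Hx0 := K_H _ Kx0; have Hy0 := K_H _ Ky0.
have vx0 := hvpos _ Hx0; have vy0 := hvpos _ Hy0.
have hM : h (x0, y0) <= 1.
  case: (eqVneq (cabs (x0 - y0)) 0) => d0.
    have e : x0 = y0 by apply/eqP; rewrite -subr_eq0; apply/eqP; exact: cabs0_eq.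
    rewrite /h /= d0 mulr0 oppr0 expR0 mulr1 e divff //; by rewrite gt_eqF.
  exfalso.
  set M := h (x0, y0).
  have M0 : 0 < M by rewrite /M /h /= divr_gt0 // mulr_gt0 // expR_gt0.
  have [x' [y' [p [Kx' Ky' hp r hd]]]] := claimK N _ _ Kx0 Ky0.
  have Hx' := K_H _ Kx'; have Hy' := K_H _ Ky'.
  have hx' := hmax (x', y') (mem_set (conj Kx' Ky')).
  have l' := h_le _ _ _ _ (hvpos _ Hx') (hvpos _ Hy') hx'.
  have rb := rel_bound _ _ _ _ _ _ _ Hx0 Hy0 Hx' Hy' hp M0 r l'.
  set d := cabs (x0 - y0) in d0 rb hd.
  have dp : 0 < d by rewrite lt0r d0 cabs_ge0.
  have [_ strict] := rho_prop _ (ltW dp).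
  have hd2 : cabs (x' - y') <= rho * d.
    apply: le_trans hd _; apply: ler_wpM2r => //; exact: cabs_ge0.
  have c0 := C_gt0.
  have hlt : C * cabs (x' - y') + 2 * s * d / gamma < C * d.
    have := strict dp; have := ler_wpM2l (ltW c0) hd2; lra.
  have : v x0 < M * v y0 * expR (C * d).
    apply: le_lt_trans rb _; rewrite ltr_pM2l ?ltr_expR //; exact: mulr_gt0.
  have : M = v x0 * expR (- (C * d)) / v y0 by [].
  move=> eM; have -> : M * v y0 * expR (C * d) = v x0.
    rewrite eM expRN; field; apply/andP; split; rewrite gt_eqF //; exact: expR_gt0.
  by rewrite ltxx.
have := le_trans (hmax (x, y) (mem_set (conj Kx Ky))) hM.
move/(h_le _ _ _ _ (hvpos _ (K_H _ Kx)) (hvpos _ (K_H _ Ky))).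
by rewrite mul1r.
Qed.

Lemma main_sec z0 z1 : H z0 -> H z1 -> v z0 <= v z1 * expR (C * cabs (z1 - z0)).
Proof.
move=> H0 H1; have [N hN] := exists_N.
have [x' [y' [p [[[Kx' Ky'] [Hx' Hy']] hp r hd]]]] := prephase N _ _ H0 H1.
have l := lipK _ _ Kx' Ky'; rewrite -[v y']mul1r in l.
have rb := rel_bound _ _ _ _ _ _ _ H0 H1 Hx' Hy' hp ltr01 r l.
apply: le_trans rb _; rewrite mul1r; apply: ler_wpM2l; first exact: ltW (hvpos _ H1).
rewrite ler_expR [cabs (z1 - z0)]cabs_sub_sym.
set d := cabs (z0 - z1) in hd *.
have d0 : 0 <= d := cabs_ge0 _.
have [le _] := rho_prop _ d0.
have hd2 : cabs (x' - y') <= rho * d.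
  apply: le_trans hd _; apply: ler_wpM2r => //.
have c0 := C_gt0.
have := ler_wpM2l (ltW c0) hd2; lra.
Qed.

End Main.
End Alg.


Theorem corollary7p12 (R : realType) (B : seq (R * R)) (gamma s : R) (m : nat)
  (H : set (R * R)) (v : R * R -> R) (lambda : R) :
  B != [::] -> uniq B ->
  1 <= gamma -> (forall b, b \in B -> gamma <= b.1) ->
  0 < s -> (1 <= m)%N ->
  open H -> bounded_set H -> mildly_regular H ->
  (forall z, cabs (z - (1 / (2 * gamma), 0)) < 1 / (2 * gamma) -> H z) ->
  (forall z, H z -> 0 < z.1) ->
  CmBar m H v ->
  {within closure H, continuous v} ->
  (forall z, closure H z -> 0 < v z) ->
  (forall z, H z -> Lambda B s v z = lambda * v z) ->
  forall z0 z1, H z0 -> H z1 ->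
    v z0 <= v z1 * expR (Num.sqrt 5 * s / gamma * cabs (z1 - z0)).
Proof.
move=> hB0 _ hg hb hs _ _ _ _ hD hH1 hCm _ hpos heig z0 z1 H0 H1.
have hvc : forall p, H p -> {for p, continuous v}.
  move=> p Hp; have [_ hc _] := hCm [::] (leq0n m); exact: hc.
have hvpos : forall z, H z -> 0 < v z.
  by move=> z Hz; apply: hpos; exact: subset_closure.
have := @main_sec _ _ _ _ _ _ _ hB0 hg hb hs hD hH1 hvc hvpos heig _ _ H0 H1; rewrite /C; exact.
Qed.
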